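(* Let $\mathcal{B}(\mathbb{R}^d)$ be the Boolean logic of Borel subsets of $\mathbb{R}^d$ (order $\subset$, orthocomplement $A\mapsto A^c=\mathbb{R}^d\setminus A$, join $\cup$, meet $\cap$), and let $\mathcal{C}(\mathbb{R}^{d+1})$ be the logic of causally complete subsets of Minkowski space described in the context. The causal completion map $$\mathrm{c}:\mathcal{B}(\mathbb{R}^d)\to\mathcal{C}(\mathbb{R}^{d+1}),\qquad \mathrm{c}(A):=(\{0\}\times A)''$$ is an injective $\sigma$-additive logic homomorphism (so that $\mathrm{c}(\mathcal{B}(\mathbb{R}^d))$ is a Boolean sublogic of $\mathcal{C}(\mathbb{R}^{d+1})$), and it is covariant with respect to the actions of the Euclidean group $\mathbf{E}(d)$ on $\mathcal{B}(\mathbb{R}^d)$ (by $A\mapsto g(A)$) and on $\mathcal{C}(\mathbb{R}^{d+1})$ (by $\mathcal{O}\mapsto \{(x_0,g\mathbf{x}):(x_0,\mathbf{x})\in\mathcal{O}\}$), i.e. $\mathrm{c}(g(A))=g\,\mathrm{c}(A)$.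
   Context: Minkowski space $\mathbb{R}^{d+1}$ has points $x=(x_0,\mathbf{x})\in\mathbb{R}\times\mathbb{R}^d$ and Lorentz product $x\cdot y=x_0y_0-\mathbf{x}\cdot\mathbf{y}$, $x^2=x\cdot x$. Write $x\sim y$ iff $x\neq y$ and $(x-y)^2\le 0$ (non-timelike separation). For $\mathcal{O}\subset\mathbb{R}^{d+1}$ its causal complement is $\mathcal{O}'=\{x: x\sim y\ \forall y\in\mathcal{O}\}$; $\mathcal{O}$ is causally complete if $\mathcal{O}=\mathcal{O}''$. $\mathcal{C}(\mathbb{R}^{d+1})$ is the set of causally complete subsets; with order $\subset$, orthocomplementation $\mathcal{O}\mapsto\mathcal{O}'$, $0=\emptyset$, $1=\mathbb{R}^{d+1}$, join $\mathcal{O}_1\vee\mathcal{O}_2=(\mathcal{O}_1\cup\mathcal{O}_2)''$ (and arbitrary joins $(\bigcup\mathcal{O}_i)''$), meet $\cap$, it is a complete orthomodular orthocomplemented lattice (a logic). A logic is a $\sigma$-complete orthocomplemented orthomodular bounded lattice. A logic homomorphism preserves $0,1$, the orthocomplement, binary joins and meets. A map $\varphi$ between such lattices is $\sigma$-additive if $\varphi(\bigvee_{A\in\mathcal{L}_0}A)=\bigvee_{A\in\mathcal{L}_0}\varphi(A)$ for every countable subset $\mathcal{L}_0$ whose distinct elements are pairwise separated ($A\le B^\perp$). *)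

(* Defs.v *)
From HB Require Import structures.
From mathcomp Require Import all_boot all_order all_algebra.
From mathcomp Require Import all_classical all_reals all_analysis.
Set Implicit Arguments. Unset Strict Implicit. Unset Printing Implicit Defensive.
Import Order.TTheory GRing.Theory Num.Theory.
Import numFieldNormedType.Exports.
Local Open Scope ring_scope.
Local Open Scope classical_set_scope.

Section Minkowski.
Variables (R : realType) (d : nat).

Definition mpoint := (R * 'rV[R]_d)%type.

Definition dotv (x y : 'rV[R]_d) : R := \sum_(i < d) x ord0 i * y ord0 i.

Definition lorentz (x y : mpoint) : R := x.1 * y.1 - dotv x.2 y.2.

Definition msub (x y : mpoint) : mpoint := (x.1 - y.1, x.2 - y.2).

Definition nontimelike (x y : mpoint) : Prop :=
  x <> y /\ lorentz (msub x y) (msub x y) <= 0.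

Definition ccompl (O : set mpoint) : set mpoint :=
  [set x | forall y, O y -> nontimelike x y].

Definition causally_complete (O : set mpoint) : Prop := O = ccompl (ccompl O).

Definition cjoin2 (O1 O2 : set mpoint) : set mpoint := ccompl (ccompl (O1 `|` O2)).
Definition cjoin (F : nat -> set mpoint) : set mpoint :=
  ccompl (ccompl (\bigcup_n F n)).

Definition borel : set (set 'rV[R]_d) := <<s [set U : set 'rV[R]_d | @open 'rV[R]_d U] >>.

Definition cmap (A : set 'rV[R]_d) : set mpoint :=
  ccompl (ccompl [set x | x.1 = 0 /\ A x.2]).

Definition euclidean (g : 'M[R]_d * 'rV[R]_d) : Prop := g.1 *m g.1^T = 1%:M.
Definition eact (g : 'M[R]_d * 'rV[R]_d) (x : 'rV[R]_d) : 'rV[R]_d := x *m g.1 + g.2.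

Definition eact_set (g : 'M[R]_d * 'rV[R]_d) (A : set 'rV[R]_d) : set 'rV[R]_d :=
  eact g @` A.
Definition eact_mset (g : 'M[R]_d * 'rV[R]_d) (O : set mpoint) : set mpoint :=
  [set y | exists2 x, O x & y = (x.1, eact g x.2)].

Definition separated_family (F : nat -> set 'rV[R]_d) : Prop :=
  forall i j, F i <> F j -> F i `<=` ~` F j.

End Minkowski.

(* Main.v *)
Require Import Defs.
From mathcomp Require Import all_boot all_order all_algebra.
From mathcomp Require Import all_classical all_reals all_analysis.
From mathcomp Require Import ring lra.
Import Order.TTheory GRing.Theory Num.Theory.
Import numFieldNormedType.Exports.
Local Open Scope ring_scope.
Local Open Scope classical_set_scope.
Set Implicit Arguments. Unset Strict Implicit.

Definition n2 {R : realType} {d : nat} (v : 'rV[R]_d) : R := dotv v v.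

Definition T {R : realType} {d : nat} (D : set 'rV[R]_d) : set (mpoint R d) :=
  [set p | forall z, (z = p.2 \/ n2 (z - p.2) < p.1 ^+ 2) -> D z].

Lemma n2_ge0 (R : realType) (d : nat) (v : 'rV[R]_d) : 0 <= n2 v.
Proof. by rewrite /n2 /dotv; apply: sumr_ge0 => i _; rewrite -expr2 sqr_ge0. Qed.

Lemma n2Z (R : realType) (d : nat) (a : R) (v : 'rV[R]_d) : n2 (a *: v) = a ^+ 2 * n2 v.
Proof.
rewrite /n2 /dotv mulr_sumr; apply: eq_bigr => i _; rewrite !mxE; ring.
Qed.

Lemma n2N (R : realType) (d : nat) (v : 'rV[R]_d) : n2 (- v) = n2 v.
Proof. by rewrite -scaleN1r n2Z; ring. Qed.

Lemma n2B (R : realType) (d : nat) (x y : 'rV[R]_d) : n2 (x - y) = n2 (y - x).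
Proof. by rewrite -opprB n2N. Qed.

Lemma dotv_mx (R : realType) (d : nat) (x y : 'rV[R]_d) : dotv x y = (x *m y^T) ord0 ord0.
Proof. by rewrite /dotv mxE; apply: eq_bigr => i _; rewrite mxE. Qed.

Lemma n2Q (R : realType) (d : nat) (Q : 'M[R]_d) (v : 'rV[R]_d) :
  Q *m Q^T = 1%:M -> n2 (v *m Q) = n2 v.
Proof.
move=> HQ; rewrite /n2 !dotv_mx trmx_mul -mulmxA (mulmxA Q) HQ mul1mx //.
Qed.

Lemma lorentzE (R : realType) (d : nat) (p q : mpoint R d) :
  lorentz (msub p q) (msub p q) = (p.1 - q.1) ^+ 2 - n2 (p.2 - q.2).
Proof. by rewrite /lorentz /msub /= expr2. Qed.

Lemma sq_le_abs (R : realType) (t s : R) : (t - s) ^+ 2 <= (`|t| + `|s|) ^+ 2.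
Proof.
have h1 : `|t| ^+ 2 = t ^+ 2 by rewrite real_normK ?num_real.
have h2 : `|s| ^+ 2 = s ^+ 2 by rewrite real_normK ?num_real.
have h3 : - (t * s) <= `|t| * `|s| by rewrite -normrM -normrN ler_norm.
nra.
Qed.

Lemma ccompl_S (R : realType) (d : nat) (A : set 'rV[R]_d) :
  ccompl [set x | x.1 = 0 /\ A x.2] = T (~` A).
Proof.
apply/seteqP; split => -[t x] /= H.
- move=> z Hz Az.
  have [hne hl] := H (0, z) (conj erefl Az).
  rewrite lorentzE /= subr0 in hl.
  case: Hz => [ez|lt].
  + subst z; rewrite subrr (_ : n2 0 = 0) ?subr0 in hl; last first.
      by rewrite -(scale0r (0 : 'rV[R]_d)) n2Z; ring.
    have t0 : t = 0 by apply/eqP; rewrite -sqrf_eq0 eq_le hl sqr_ge0.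
    by apply: hne; rewrite t0.
  + move: lt => /= hlt; rewrite n2B in hlt; clear hne H; lra.
- move=> [s a] /= [-> Aa]; split.
  + by case=> t0 xa; apply: (H a) => //; left.
  + rewrite lorentzE /= subr0 n2B; rewrite subr_le0 leNgt; apply/negP => lt.
    by apply: (H a) => //; right.
Qed.
Lemma n20 (R : realType) (d : nat) : n2 (0 : 'rV[R]_d) = 0.
Proof. by rewrite -(scale0r (0 : 'rV[R]_d)) n2Z; ring. Qed.

Lemma nt_pt (R : realType) (d : nat) (t : R) (x z : 'rV[R]_d) :
  nontimelike (t, x) (0, z) -> (z = x \/ n2 (z - x) < t ^+ 2) -> False.
Proof.
move=> [hne hl]; rewrite lorentzE /= subr0 in hl.
case=> [ez|hlt].
- subst z; rewrite subrr n20 subr0 in hl.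
  have t0 : t = 0 by apply/eqP; rewrite -sqrf_eq0 eq_le hl sqr_ge0.
  by apply: hne; rewrite t0.
- rewrite n2B in hlt; clear hne; lra.
Qed.

Lemma T_pt (R : realType) (d : nat) (D : set 'rV[R]_d) z : D z -> T D (0, z).
Proof.
move=> Dz w /= [->//|]; rewrite expr0n /= => h.
by have := n2_ge0 (w - z); rewrite leNgt h.
Qed.

Lemma key_ineq (R : realType) (a c l D2 : R) :
  0 < a -> 0 < c -> l * c = a -> 0 <= D2 -> D2 < c ^+ 2 -> l ^+ 2 * D2 < a ^+ 2.
Proof.
move=> ha hc hl hD hDc.
have hl0 : 0 < l.
  by move: ha; rewrite -hl pmulr_lgt0.
have e : a ^+ 2 = l ^+ 2 * c ^+ 2 by rewrite -hl; ring.
rewrite e ltr_pM2l //; exact: exprn_gt0.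
Qed.

Lemma ccompl_T (R : realType) (d : nat) (D : set 'rV[R]_d) :
  ccompl (T D) = T (~` D).
Proof.
apply/seteqP; split => -[t x] /= H.
- move=> z Hz Dz.
  exact: (nt_pt (H _ (T_pt Dz)) Hz).
- move=> [s y] Hq; split.
  + case=> ets exy; subst; apply: (H y); first by left.
    by apply: Hq; left.
  + rewrite lorentzE /= subr_le0 leNgt; apply/negP => hlt.
    set a := `|t|; set b := `|s|; set c := a + b.
    have hsq : (t - s) ^+ 2 <= c ^+ 2 := sq_le_abs t s.
    set D2 := n2 (y - x).
    have hD : 0 <= D2 by exact: n2_ge0.
    have ha : 0 <= a by exact: normr_ge0.
    have hb : 0 <= b by exact: normr_ge0.
    have hDc : D2 < c ^+ 2 by rewrite /D2 -n2B; lra.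
    have hc : 0 < c.
      rewrite lt_neqAle addr_ge0 // andbT; apply/eqP => c0.
      by move: hDc; rewrite -c0 expr0n /= ltNge hD.
    set l := a / c.
    have hl : l * c = a by rewrite /l mulfVK // gt_eqF.
    have hl' : (1 - l) * c = b by rewrite mulrBl mul1r hl /c; ring.
    have ea : a ^+ 2 = t ^+ 2 by rewrite /a real_normK ?num_real.
    have eb : b ^+ 2 = s ^+ 2 by rewrite /b real_normK ?num_real.
    set z := x + l *: (y - x).
    have zx : z - x = l *: (y - x) by rewrite /z addrAC subrr add0r.
    have zy : z - y = - ((1 - l) *: (y - x)).
      by rewrite /z scalerBl scale1r !opprB addrA (addrC (l *: _)).
    apply: (H z).
      have [a0|a0] := eqVneq a 0.
        left; rewrite /z /l a0 mul0r scale0r addr0 //.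
      right; rewrite zx n2Z -ea; apply: (key_ineq _ hc hl hD hDc).
      by rewrite lt_neqAle eq_sym a0 ha.
    apply: Hq => /=.
    have [b0|b0] := eqVneq b 0.
      left; apply/eqP; rewrite -subr_eq0 zy oppr_eq0.
      have : (1 - l) * c == 0 by rewrite hl' b0.
      rewrite mulf_eq0 (gt_eqF hc) orbF => /eqP ->.
      by rewrite scale0r.
    right; rewrite zy n2N n2Z -eb; apply: (key_ineq _ hc hl' hD hDc).
    by rewrite lt_neqAle eq_sym b0 hb.
Qed.

Lemma cmapE (R : realType) (d : nat) (A : set 'rV[R]_d) : cmap A = T A.
Proof. by rewrite /cmap ccompl_S ccompl_T setCK. Qed.

Lemma T0 (R : realType) (d : nat) (A : set 'rV[R]_d) x : T A (0, x) <-> A x.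
Proof. by split => [h|/T_pt//]; apply: h; left. Qed.

Lemma ccomplU (R : realType) (d : nat) (X Y : set (mpoint R d)) :
  ccompl (X `|` Y) = ccompl X `&` ccompl Y.
Proof.
apply/seteqP; split => p /=.
- by move=> h; split => q hq; apply: h; [left|right].
- by move=> [h1 h2] q [hq|hq]; [apply: h1|apply: h2].
Qed.

Lemma ccomplB (R : realType) (d : nat) (F : nat -> set (mpoint R d)) :
  ccompl (\bigcup_n F n) = \bigcap_n ccompl (F n).
Proof.
apply/seteqP; split => p /=.
- by move=> h n _ q hq; apply: h; exists n.
- by move=> h q [n _ hq]; apply: (h n).
Qed.

Lemma TI (R : realType) (d : nat) (A B : set 'rV[R]_d) : T (A `&` B) = T A `&` T B.
Proof.
apply/seteqP; split => p /=.
- by move=> h; split => z hz; have [] := h z hz.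
- by move=> [h1 h2] z hz; split; [apply: h1|apply: h2].
Qed.

Lemma TB (R : realType) (d : nat) (F : nat -> set 'rV[R]_d) :
  T (\bigcap_n F n) = \bigcap_n T (F n).
Proof.
apply/seteqP; split => p /=.
- by move=> h n _ z hz; apply: h.
- by move=> h z hz n _; apply: h.
Qed.

Lemma TTB (R : realType) (d : nat) (A : set 'rV[R]_d) : ccompl (ccompl (T A)) = T A.
Proof. by rewrite !ccompl_T setCK. Qed.

Lemma T_eact (R : realType) (d : nat) (g : 'M[R]_d * 'rV[R]_d) (A : set 'rV[R]_d) :
  euclidean g -> T (eact_set g A) = eact_mset g (T A).
Proof.
case: g => Q b; rewrite /euclidean /= => HQ.
have HQ' : Q^T *m Q = 1%:M by apply: mulmx1C.
have HQT : Q^T *m Q^T^T = 1%:M by rewrite trmxK.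
have inv1 u : ((u - b) *m Q^T) *m Q + b = u.
  by rewrite -mulmxA HQ' mulmx1 subrK.
have inv2 u : (u *m Q + b - b) *m Q^T = u.
  by rewrite addrK -mulmxA HQ mulmx1.
apply/seteqP; split => -[t y] /= H.
- exists (t, (y - b) *m Q^T) => /=; last by rewrite /eact /= inv1.
  move=> z hz.
  have [a Aa ea] : eact_set (Q, b) A (z *m Q + b).
    apply: H => /=.
    case: hz => [->|hz]; first by left; rewrite inv1.
    right; rewrite -(inv1 y) opprD addrACA subrr addr0 -mulmxBl n2Q //.
  have -> : z = (z *m Q + b - b) *m Q^T by rewrite inv2.
  by rewrite -ea /eact /= inv2.
- case: H => -[s x] /= hx [-> ->] w hw.
  exists ((w - b) *m Q^T); last by rewrite /eact /= inv1.
  apply: hx => /=.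
  case: hw => [->|hw]; first by left; rewrite /eact /= inv2.
  right; rewrite -(inv2 x) -mulmxBl n2Q; last exact: HQT.
  rewrite addrK (_ : w - b - x *m Q = w - (x *m Q + b)) //.
  by rewrite opprD addrA addrAC.
Qed.

Theorem lemma2p7 (R : realType) (d : nat) :
  (* c maps Borel sets into causally complete sets *)
  (forall A : set 'rV[R]_d, borel A -> causally_complete (cmap A))
  (* preserves 0 and 1 *)
  /\ cmap (set0 : set 'rV[R]_d) = set0
  /\ cmap (setT : set 'rV[R]_d) = setT
  (* preserves orthocomplement *)
  /\ (forall A : set 'rV[R]_d, borel A -> cmap (~` A) = ccompl (cmap A))
  (* preserves binary joins and meets *)
  /\ (forall A B : set 'rV[R]_d, borel A -> borel B -> cmap (A `|` B) = cjoin2 (cmap A) (cmap B))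
  /\ (forall A B : set 'rV[R]_d, borel A -> borel B -> cmap (A `&` B) = cmap A `&` cmap B)
  (* sigma-additivity *)
  /\ (forall F : nat -> set 'rV[R]_d, (forall n, borel (F n)) -> separated_family F ->
        cmap (\bigcup_n F n) = cjoin (fun n => cmap (F n)))
  (* injectivity *)
  /\ (forall A B : set 'rV[R]_d, borel A -> borel B -> cmap A = cmap B -> A = B)
  (* E(d)-covariance *)
  /\ (forall (g : 'M[R]_d * 'rV[R]_d) (A : set 'rV[R]_d), euclidean g -> borel A ->
        cmap (eact_set g A) = eact_mset g (cmap A)).
Proof.
split; first by move=> A _; rewrite /causally_complete cmapE TTB.
split.
  rewrite cmapE; apply/seteqP; split => p //= h.
  by apply: (h p.2); left.
split.
  by rewrite cmapE; apply/seteqP; split => p //= _ z _.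
split; first by move=> A _; rewrite !cmapE ccompl_T.
split.
  move=> A B _ _; rewrite /cjoin2 !cmapE ccomplU !ccompl_T -TI ccompl_T.
  by rewrite -setCU setCK.
split; first by move=> A B _ _; rewrite !cmapE TI.
split.
  move=> F _ _.
  have -> : (fun n => cmap (F n)) = (fun n => T (F n)).
    by apply: funext => n; rewrite cmapE.
  rewrite /cjoin cmapE ccomplB.
  have -> : (\bigcap_n ccompl (T (F n))) = \bigcap_n T (~` F n).
    by congr bigcap; apply: funext => n; rewrite ccompl_T.
  by rewrite -TB ccompl_T -setC_bigcup setCK.
split.
  move=> A B _ _; rewrite !cmapE => e; apply/seteqP; split => x.
  - by move/T0; rewrite e => /T0.
  - by move/T0; rewrite -e => /T0.
by move=> g A hg _; rewrite !cmapE T_eact.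
Qed.
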